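(* Let $F\subset\mathbb R^d$ be a bounded set with Minkowski dimension $s$ whose Minkowski content $\mathcal M(F)=\lim_{\varepsilon\searrow0}\varepsilon^{s-d}\mathrm{vol}_d(F_\varepsilon)\in(0,\infty)$ exists. Let $\varepsilon_1>\varepsilon_2>\dots>0$, $x_j=-\log\varepsilon_j$, and suppose $y_{j}=\log\mathcal M(F)+s\,x_j+\delta_j$, $j\in\mathbb N$, where the $\delta_j$ have mean zero, finite positive variance, and covariance matrices $Q_n$ of $(\delta_1,\dots,\delta_n)$ satisfying $0<\inf_n\nu_{\min}(Q_n)\le\sup_n\nu_{\max}(Q_n)<\infty$. Suppose $\widetilde S_n^2=\Theta(n^\gamma)$ and $\bar x_n=O(n^{\mu/2})$ for constants $\gamma,\mu\ge0$ with $\alpha:=1-\max\{\gamma,\mu\}-2\max\{0,\mu-\gamma\}>0$. Let $(\hat\beta^{(n)},\hat s^{(n)})$ minimize $\sum_{j=1}^n(y_j-\beta-sx_j)^2$ and $\hat{\mathcal M}^{(n)}=\exp(\hat\beta^{(n)})$. Then for every $\varepsilon>0$, $P(|\hat s^{(n)}-s|>\varepsilon)=O(n^{-\alpha})$ and $P(|\hat{\mathcal M}^{(n)}-\mathcal M(F)|>\varepsilon)=O(n^{-\alpha})$ as $n\to\infty$.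
   Context: $F_\varepsilon=\{x:\operatorname{dist}(x,F)\le\varepsilon\}$; the observations are intended as $y_j=\log(\varepsilon_j^{-d}\mathrm{vol}_d(F_{\varepsilon_j}))$. $\bar x_n=\frac1n\sum_{i\le n}x_i$, $\widetilde S_n^2=\frac1n\sum_{i\le n}(x_i-\bar x_n)^2$; $\nu_{\min},\nu_{\max}$ are extreme eigenvalues; $\Theta$ means bounded above and below by positive constant multiples eventually. *)

(* Defs.v *)
From HB Require Import structures.
From mathcomp Require Import all_boot all_order all_algebra.
From mathcomp Require Import all_classical all_reals all_analysis.
Set Implicit Arguments. Unset Strict Implicit. Unset Printing Implicit Defensive.
Import Order.TTheory GRing.Theory Num.Theory.
Import numFieldNormedType.Exports.
Local Open Scope classical_set_scope.
Local Open Scope ring_scope.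

Section Defs.
Variable R : realType.

Definition eucl_dist (d : nat) (x y : 'rV[R]_d) : R :=
  Num.sqrt (\sum_(i < d) (x ord0 i - y ord0 i) ^+ 2).

(** dist(x, F) = inf_{y in F} |x - y| (extended real, +oo if F is empty). *)
Definition dist_set (d : nat) (x : 'rV[R]_d) (F : set 'rV[R]_d) : \bar R :=
  ereal_inf [set (eucl_dist x y)%:E | y in F].

Definition nbhd_set (d : nat) (F : set 'rV[R]_d) (e : R) : set 'rV[R]_d :=
  [set x | (dist_set x F <= e%:E)%E].

Definition box (d : nat) (a b : 'I_d -> R) : set 'rV[R]_d :=
  [set x | forall i, a i <= x ord0 i <= b i].

Definition vol (d : nat) (A : set 'rV[R]_d) : \bar R :=
  ereal_inf [set v | exists a b : nat -> 'I_d -> R,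
     [/\ (forall k i, a k i <= b k i),
         A `<=` \bigcup_k box (a k) (b k) &
         v = (\sum_(0 <= k <oo) (\prod_(i < d) (b k i - a k i))%:E)%E]].

Definition bounded_Rd (d : nat) (F : set 'rV[R]_d) : Prop :=
  exists r : R, forall x, F x -> forall i, `|x ord0 i| <= r.

Definition minkowski_dim (d : nat) (F : set 'rV[R]_d) (s : R) : Prop :=
  (fun e : R => d%:R - ln (fine (vol (nbhd_set F e))) / ln e) @ 0^'+ --> s.

Definition minkowski_content (d : nat) (F : set 'rV[R]_d) (s M : R) : Prop :=
  (fun e : R => ((e `^ (s - d%:R))%:E * vol (nbhd_set F e))%E) @ 0^'+ --> M%:E.

(** Regression quantities (indices j = 0, ..., n-1 stand for 1, ..., n). *)
Definition xbar (x : nat -> R) (n : nat) : R := (\sum_(j < n) x j) / n%:R.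

Definition S2tilde (x : nat -> R) (n : nat) : R :=
  (\sum_(j < n) (x j - xbar x n) ^+ 2) / n%:R.

Definition lsq_obj (x y : nat -> R) (n : nat) (beta s : R) : R :=
  \sum_(j < n) (y j - beta - s * x j) ^+ 2.

Definition cov_matrix (dT : measure_display) (T : measurableType dT)
  (P : probability T R) (delta : nat -> T -> R) (n : nat) : 'M[R]_n :=
  \matrix_(i < n, j < n) fine (covariance P (delta i) (delta j)).

End Defs.

(* Main.v *)
Require Import Defs.
From HB Require Import structures.
From mathcomp Require Import all_boot all_order all_algebra.
From mathcomp Require Import all_classical all_reals all_analysis.
From mathcomp Require Import complex ring lra.
Import Order.TTheory GRing.Theory Num.Theory.
Import numFieldNormedType.Exports.
Local Open Scope classical_set_scope.
Local Open Scope ring_scope.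

Section Spec.
Variable R : rcfType.
Local Open Scope complex_scope.
Local Open Scope sesquilinear_scope.

Lemma quad_le n (Q : 'M[R]_n) (C : R) : Q^T = Q ->
  (forall a, eigenvalue Q a -> a <= C) ->
  forall v : 'rV_n, (v *m Q *m v^T) 0 0 <= C * (v *m v^T) 0 0.
Proof.
move=> Qsym HC v.
pose f := real_complex R.
pose A := Q ^ f.
have Aherm : A \is hermsymmx.
  apply: realsym_hermsym.
    apply/is_hermitianmxP; rewrite expr0 scale1r; apply/matrixP => i j.
    by rewrite !mxE -[in LHS]Qsym mxE.
  apply/mxOverP => i j; rewrite mxE; apply/complex_realP; by exists (Q i j).
have Anorm := hermitian_normalmx Aherm.
pose Pm := spectralmx A; pose D := spectral_diag A.
have PU : Pm \is unitarymx := spectral_unitarymx A.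
have Punit : Pm \in unitmx := unitarymx_unit PU.
have AE : A = Pm^t* *m diag_mx D *m Pm.
  by rewrite -invmx_unitary //; apply/orthomx_spectralP.
have Dreal := hermitian_spectral_diag_real Aherm.
have Dle : forall i, D 0 i <= C%:C.
  move=> i; have /complex_realP [r Dr] : D 0 i \is Num.real by apply: (mxOverP Dreal).
  rewrite Dr lecR; apply: HC.
  rewrite -(eigenvalue_map f); apply/eigenvalueP; exists (row i Pm); last first.
    apply/eqP => Hr0.
    have : row i (Pm *m invmx Pm) = 0 by rewrite row_mul Hr0 mul0mx.
    rewrite mulmxV // => /rowP /(_ i); rewrite !mxE eqxx /= => /eqP.
    by rewrite oner_eq0.
  rewrite -/A AE.
  rewrite !mulmxA -row_mul.
  have -> : Pm *m Pm^t* = 1%:M by apply/unitarymxP.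
  by rewrite row1 -rowE row_diag_mx -scalemxAl -rowE Dr.
pose vc := v ^ f.
have hT : forall m (u : 'M[R]_(1,m)), map_mx f (u^T) = (map_mx f u)^t*.
  move=> m u; apply/matrixP => i j; rewrite !mxE.
  by rewrite conj_Creal //; apply/complex_realP; eexists.
have PtP : Pm^t* *m Pm = 1%:M by rewrite -invmx_unitary // mulVmx.
pose w := vc *m Pm^t*.
have wt : Pm *m vc^t* = w^t*.
  by rewrite /w trmx_mul map_mxM trmxCK.
have E1 : ((v *m Q *m v^T) 0 0)%:C = (w *m diag_mx D *m w^t*) 0 0.
  rewrite (_ : _%:C = (map_mx f (v *m Q *m v^T)) 0 0); last by rewrite [RHS]mxE.
  rewrite !map_mxM hT -/vc -/A AE.
  by rewrite !mulmxA -[_ *m Pm *m _]mulmxA wt.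
have E2 : ((v *m v^T) 0 0)%:C = (w *m w^t*) 0 0.
  rewrite (_ : _%:C = (map_mx f (v *m v^T)) 0 0); last by rewrite [RHS]mxE.
  rewrite !map_mxM hT -/vc.
  by rewrite /w -mulmxA -wt !mulmxA -[vc *m _ *m _]mulmxA PtP mulmx1.
rewrite -lecR rmorphM /= E1 E2 !mxE mulr_sumr; apply: ler_sum => j _.
rewrite mul_mx_diag !mxE -mulrA [D 0 j * _]mulrC mulrA.
rewrite [C%:C * _]mulrC; apply: ler_wpM2l; first by rewrite -normCK exprn_ge0.
exact: Dle.
Qed.
End Spec.

Lemma mset_lt d (T : measurableType d) (R : realType) (g : T -> R) (r : R) :
  measurable_fun setT g -> measurable [set w | (r < g w)%R].
Proof.
move=> mg; have := mg measurableT _ (measurable_itv `]r, +oo[).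
rewrite setTI; congr measurable; apply/seteqP; split => w /=;
  by rewrite in_itv /= andbT.
Qed.

Lemma mset_le d (T : measurableType d) (R : realType) (g : T -> R) (r : R) :
  measurable_fun setT g -> measurable [set w | (r <= g w)%R].
Proof.
move=> mg; have := mg measurableT _ (measurable_itv `[r, +oo[).
rewrite setTI; congr measurable; apply/seteqP; split => w /=;
  by rewrite in_itv /= andbT.
Qed.

Lemma mnorm d (T : measurableType d) (R : realType) (g : T -> R) :
  measurable_fun setT g -> measurable_fun setT (fun w => `|g w|).
Proof. by move=> mg; apply: measurableT_comp => //; exact: normr_measurable. Qed.

Section Prob.
Context d (T : measurableType d) (R : realType) (P : probability T R).
Variable delta : nat -> {RV P >-> R}.
Hypothesis H2 : forall j, (delta j : T -> R) \in Lfun P 2%:E.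
Hypothesis H0 : forall j, ('E_P[delta j] = 0)%E.

Definition Zf (n : nat) (a : nat -> R) : T -> R :=
  fun w => \sum_(j < n) a j * delta j w.

Let Pfin : P setT \is a fin_num := fin_num_measure P _ measurableT.

Lemma H1 j : (delta j : T -> R) \in Lfun P 1.
Proof. by apply: (Lfun_subset12 Pfin); exact: H2. Qed.

Lemma ZfS n a : Zf n.+1 a = (Zf n a \+ a n \o* (delta n : T -> R))%R.
Proof. by apply/funext => w; rewrite /Zf big_ord_recr /= mulrC. Qed.

Lemma Zf0 a : Zf 0 a = cst 0.
Proof. by apply/funext => w; rewrite /Zf big_ord0. Qed.

Lemma Zf_L2 n a : Zf n a \in Lfun P 2%:E.
Proof.
elim: n => [|n IH]; first by rewrite Zf0 Lfun_cst.
rewrite ZfS; apply: rpredD => //; first by rewrite lee_fin ler1n.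
by move=> ?; apply: Lfun_scale => //; rewrite ler1n.
Qed.

Lemma Zf_E n a : ('E_P[Zf n a] = 0)%E.
Proof.
elim: n => [|n IH]; first by rewrite Zf0 expectation_cst.
rewrite ZfS expectationD ?IH ?expectationZl ?H0 ?mule0 ?adde0 //.
- exact: H1.
- by apply: (Lfun_subset12 Pfin); exact: Zf_L2.
- by apply: Lfun_scale => //; exact: H1.
Qed.

Lemma cov_Zf_l n a (Y : T -> R) : Y \in Lfun P 2%:E ->
  covariance P (Zf n a) Y =
  (\sum_(j < n) a j * fine (covariance P (delta j) Y))%:E.
Proof.
move=> Y2; elim: n => [|n IH]; first by rewrite Zf0 covariance_cst_l big_ord0.
rewrite ZfS covarianceDl ?Zf_L2 //; last by apply: Lfun_scale => //; rewrite ler1n.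
rewrite covarianceZl ?H1 ?Lfun2_mul_Lfun1 //; last by apply: (Lfun_subset12 Pfin).
rewrite IH big_ord_recr /= EFinD; congr (_ + _)%E.
rewrite EFinM fineK //; apply: covariance_fin_num; rewrite ?H1 ?Lfun2_mul_Lfun1 //.
by apply: (Lfun_subset12 Pfin).
Qed.

Lemma var_Zf n a : 'V_P[Zf n a] =
  (\sum_(i < n) a i * \sum_(j < n) a j * fine (covariance P (delta j) (delta i)))%:E.
Proof.
rewrite /variance cov_Zf_l ?Zf_L2 //; congr EFin; apply: eq_bigr => i _.
by rewrite covarianceC cov_Zf_l ?H2.
Qed.

Lemma var_Zf_le n a Cq :
  (forall b, eigenvalue (cov_matrix P (fun j => delta j : T -> R) n) b -> b <= Cq) ->
  ('V_P[Zf n a] <= (Cq * \sum_(j < n) a j ^+ 2)%:E)%E.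
Proof.
move=> HC; rewrite var_Zf lee_fin.
pose v := \row_(j < n) a j.
have Qsym : (cov_matrix P (fun j => delta j : T -> R) n)^T = cov_matrix P (fun j => delta j : T -> R) n.
  by apply/matrixP => i j; rewrite !mxE covarianceC.
have := @quad_le R _ _ _ Qsym HC v.
rewrite !mxE; congr (_ <= _).
  apply: eq_bigr => i _; rewrite /v !mxE mulrC; congr (_ * _).
  by apply: eq_bigr => j _; rewrite !mxE.
congr (_ * _); apply: eq_bigr => j _; by rewrite /v !mxE expr2.
Qed.

Lemma mZf n a : measurable_fun setT (Zf n a).
Proof.
elim: n => [|n IH]; first by rewrite Zf0.
rewrite ZfS; apply: measurable_realfun.measurable_funD => //; apply: measurable_realfun.measurable_funM => //.
Qed.

Lemma Zm_ex n a : exists Zm : {mfun T >-> R}, (Zm : T -> R) = Zf n a.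
Proof.
have H : Zf n a \in mfun by rewrite inE; exact: mZf.
by exists (mfun_Sub H); rewrite mfun_valP.
Qed.

Lemma cheb_Zf n a r Cq : (0 < r)%R ->
  (forall b, eigenvalue (cov_matrix P (fun j => delta j : T -> R) n) b -> b <= Cq) ->
  (P [set w | (r < `|Zf n a w|)%R] <= (r ^- 2 * (Cq * \sum_(j < n) a j ^+ 2))%:E)%E.
Proof.
move=> r0 HC; have [Zm ZmE] := Zm_ex n a.
have := chebyshev (Zm : {RV P >-> R}) r0.
rewrite ZmE Zf_E /= => H.
apply: le_trans; last first.
  rewrite EFinM; apply: le_trans; first exact: H.
  apply: lee_wpmul2l; first by rewrite lee_fin invr_ge0 exprn_ge0 // ltW.
  exact: var_Zf_le.
apply: le_measure; rewrite ?inE.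
- by apply: mset_lt; apply: mnorm; exact: mZf.
- apply: mset_le; apply: mnorm; apply: measurable_realfun.measurable_funB => //; exact: mZf.
- by move=> w /= /ltW; rewrite subr0.
Qed.

End Prob.

Section Alg.
Context {R : realType}.

Lemma quad0 (A B : R) : 0 <= B -> (forall t, 0 <= A * t + B * t ^+ 2) -> A = 0.
Proof.
move=> B0 H; have B1 : B + 1 != 0 by rewrite gt_eqF // ltr_wpDl.
have := H (- A / (B + 1)).
have -> : A * (- A / (B + 1)) + B * (- A / (B + 1)) ^+ 2 = - (A / (B + 1)) ^+ 2.
  by field.
rewrite oppr_ge0 => h; have : (A / (B + 1)) ^+ 2 = 0.
  by apply/eqP; rewrite eq_le h sqr_ge0.
move/eqP; rewrite sqrf_eq0 mulf_eq0 invr_eq0 (negbTE B1) orbF.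
by move/eqP.
Qed.

Arguments quad0 {A B}.

Lemma sum_expand n (r z : nat -> R) (t : R) :
  \sum_(j < n) (r j - t * z j) ^+ 2 =
  \sum_(j < n) r j ^+ 2 + ((-2) * \sum_(j < n) r j * z j) * t
     + (\sum_(j < n) z j ^+ 2) * t ^+ 2.
Proof.
rewrite mulr_sumr !mulr_suml -!big_split /=; apply: eq_bigr => j _ /=; ring.
Qed.

Lemma normal_eqs (x y : nat -> R) n b0 s0 :
  (forall b s', lsq_obj x y n b0 s0 <= lsq_obj x y n b s') ->
  \sum_(j < n) (y j - b0 - s0 * x j) = 0 /\
  \sum_(j < n) (y j - b0 - s0 * x j) * x j = 0.
Proof.
move=> Hmin; split.
- have h : forall t, 0 <= ((-2) * \sum_(j < n) (y j - b0 - s0 * x j) * 1) * t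
      + (\sum_(j < n) 1 ^+ 2) * t ^+ 2.
    move=> t; have := Hmin (b0 + t) s0; rewrite /lsq_obj.
    have -> : \sum_(j < n) (y j - (b0 + t) - s0 * x j) ^+ 2 =
      \sum_(j < n) ((y j - b0 - s0 * x j) - t * 1) ^+ 2.
      by apply: eq_bigr => j _; congr (_ ^+ 2); ring.
    by rewrite (sum_expand _ (fun j => y j - b0 - s0 * x j) (fun _ => 1)) -addrA lerDl.
  have B0 : 0 <= \sum_(j < n) (1:R) ^+ 2 by apply: sumr_ge0 => j _; exact: sqr_ge0.
  have := quad0 B0 h; move/eqP.
  rewrite mulf_eq0 oppr_eq0 pnatr_eq0 /= => /eqP.
  by under eq_bigr do rewrite mulr1.
- have h : forall t, 0 <= ((-2) * \sum_(j < n) (y j - b0 - s0 * x j) * x j) * t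
      + (\sum_(j < n) x j ^+ 2) * t ^+ 2.
    move=> t; have := Hmin b0 (s0 + t); rewrite /lsq_obj.
    have -> : \sum_(j < n) (y j - b0 - (s0 + t) * x j) ^+ 2 =
      \sum_(j < n) ((y j - b0 - s0 * x j) - t * x j) ^+ 2.
      by apply: eq_bigr => j _; congr (_ ^+ 2); ring.
    by rewrite (sum_expand _ (fun j => y j - b0 - s0 * x j) x) -addrA lerDl.
  have B0 : 0 <= \sum_(j < n) x j ^+ 2 by apply: sumr_ge0 => j _; exact: sqr_ge0.
  have := quad0 B0 h; move/eqP.
  by rewrite mulf_eq0 oppr_eq0 pnatr_eq0 /= => /eqP.
Qed.

Lemma lin3 n (a b c : R) (f g h : nat -> R) :
  \sum_(j < n) (a * f j + b * g j + c * h j) =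
  a * \sum_(j < n) f j + b * \sum_(j < n) g j + c * \sum_(j < n) h j.
Proof. by rewrite !big_split /= !mulr_sumr. Qed.

Lemma sum1 n : \sum_(j < n) (1 : R) = n%:R.
Proof. by rewrite sumr_const card_ord. Qed.

Lemma ident (x e : nat -> R) n L s b0 s0 :
  (0 < n)%N -> 0 < \sum_(j < n) (x j - xbar x n) ^+ 2 ->
  (forall b s', lsq_obj x (fun j => L + s * x j + e j) n b0 s0
                 <= lsq_obj x (fun j => L + s * x j + e j) n b s') ->
  s0 - s = (\sum_(j < n) (x j - xbar x n) * e j) / \sum_(j < n) (x j - xbar x n) ^+ 2 /\
  b0 - L = \sum_(j < n) (n%:R^-1 - xbar x n * (x j - xbar x n)
                          / \sum_(j < n) (x j - xbar x n) ^+ 2) * e j.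
Proof.
move=> n0 S0 Hmin; have [N1 N2] := @normal_eqs _ _ _ _ _ Hmin.
set S := \sum_(j < n) (x j - xbar x n) ^+ 2 in S0 *.
set xb := xbar x n.
set X1 := \sum_(j < n) x j; set X2 := \sum_(j < n) x j ^+ 2.
set E1 := \sum_(j < n) e j; set EX := \sum_(j < n) x j * e j.
have nn0 : (n%:R : R) != 0 by rewrite pnatr_eq0 -lt0n.
have xbE : xb = X1 / n%:R by [].
have F1 : (L - b0) * n%:R + (s - s0) * X1 + 1 * E1 = 0.
  rewrite -N1 -sum1 -(lin3 _ _ _ _ (fun _ => 1) x e); apply: eq_bigr => j _ /=; ring.
have F2 : (L - b0) * X1 + (s - s0) * X2 + 1 * EX = 0.
  rewrite -N2 -(lin3 _ _ _ _ x (fun j => x j ^+ 2) (fun j => x j * e j)); apply: eq_bigr => j _ /=; ring.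
have F3 : S = 1 * X2 + (-2 * xb) * X1 + xb ^+ 2 * n%:R.
  rewrite -sum1 -(lin3 _ _ _ _ (fun j => x j ^+ 2) x (fun j => 1)) /S /xb; apply: eq_bigr => j _ /=; ring.
have F4 : \sum_(j < n) (x j - xb) * e j = 1 * EX + (- xb) * E1 + 0 * E1.
  rewrite -(lin3 _ _ _ _ (fun j => x j * e j) e e); apply: eq_bigr => j _ /=; ring.
have F5 : \sum_(j < n) (n%:R^-1 - xb * (x j - xb) / S) * e j =
    n%:R^-1 * E1 + (- xb / S) * EX + (xb ^+ 2 / S) * E1.
  rewrite -(lin3 _ _ _ _ e (fun j => x j * e j) e); apply: eq_bigr => j _ /=; ring.
have S0' : S != 0 by rewrite gt_eqF.
have key : (s - s0) * S + (EX - xb * E1) = 0.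
  rewrite -[RHS](_ : (L - b0) * X1 + (s - s0) * X2 + 1 * EX
       - xb * ((L - b0) * n%:R + (s - s0) * X1 + 1 * E1) = 0); last first.
    by rewrite F1 F2 mulr0 subrr.
  rewrite F3 xbE; field; exact: nn0.
rewrite F4 F5; split.
  apply: (mulIf S0'); rewrite divfK //; apply/eqP; rewrite -subr_eq0; apply/eqP.
  transitivity (- ((s - s0) * S + (EX - xb * E1))); first ring.
  by rewrite key oppr0.
have hu : b0 - L = (s - s0) * xb + E1 / n%:R.
  apply: (mulIf nn0); rewrite xbE; apply/eqP; rewrite -subr_eq0; apply/eqP.
  transitivity (- ((L - b0) * n%:R + (s - s0) * X1 + 1 * E1)); last by rewrite F1 oppr0.
  by field.
rewrite hu; apply: (mulIf S0'); apply/eqP; rewrite -subr_eq0; apply/eqP.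
rewrite -[RHS](_ : xb * ((s - s0) * S + (EX - xb * E1)) = 0); last by rewrite key mulr0.
by field; rewrite S0' nn0.
Qed.

Lemma exp_close (M e D : R) : 0 < M -> 0 < e ->
  `|D| <= ln (1 + e / M) -> `|expR (ln M + D) - M| <= e.
Proof.
move=> M0 e0 hD; set q := e / M.
have q0 : 0 < q by rewrite divr_gt0.
have eq : e = M * q by rewrite /q mulrC divfK // gt_eqF.
rewrite expRD lnK ?posrE //.
have h1 : expR D <= 1 + q.
  rewrite -[X in _ <= X]lnK ?posrE; last by lra.
  by rewrite ler_expR; apply: le_trans hD; rewrite ler_norm.
have h2 : (1 + q)^-1 <= expR D.
  rewrite -[X in X <= _]lnK ?posrE ?invr_gt0; last by lra.
  rewrite ler_expR lnV ?posrE; last by lra.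
  by rewrite lerNl; apply: le_trans hD; rewrite -normrN ler_norm.
have h3 : 1 - q <= (1 + q)^-1.
  rewrite -[X in _ <= X]mul1r ler_pdivlMr; last by lra.
  nra.
rewrite ler_norml eq; apply/andP; split; nra.
Qed.

Lemma sumc2 n (a : nat -> R) (xb S : R) : (0 < n)%N -> 0 < S ->
  \sum_(j < n) a j ^+ 2 = S ->
  \sum_(j < n) (n%:R^-1 - xb * a j / S) ^+ 2 <= 2 / n%:R + 2 * xb ^+ 2 / S.
Proof.
move=> n0 S0 HS.
have nn0 : (n%:R : R) != 0 by rewrite pnatr_eq0 -lt0n.
apply: (@le_trans _ _ (\sum_(j < n) (2 * n%:R^-1 ^+ 2 * 1 + 2 * (xb / S) ^+ 2 * a j ^+ 2))).
  apply: ler_sum => j _; set u := n%:R^-1; set v := xb * a j / S.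
  have -> : 2 * u ^+ 2 * 1 + 2 * (xb / S) ^+ 2 * a j ^+ 2 = 2 * u ^+ 2 + 2 * v ^+ 2.
    by rewrite /v; field; rewrite gt_eqF.
  have := sqr_ge0 (u + v); nra.
rewrite big_split /= -!mulr_sumr sum1 HS.
have -> : 2 * n%:R^-1 ^+ 2 * n%:R = 2 / (n%:R : R) by field.
have -> : 2 * (xb / S) ^+ 2 * S = 2 * xb ^+ 2 / S by field; rewrite gt_eqF.
by [].
Qed.

End Alg.

Section RL.
Context {R : realType}.

Lemma pw_ge1 (nr g : R) : 1 <= nr -> 0 <= g -> 1 <= nr `^ g.
Proof. by move=> n1 g0; rewrite -(powRr0 nr); apply: ler_powR. Qed.

Arguments pw_ge1 {nr g}.

Lemma pw_inv (nr al : R) : 1 <= nr -> al <= 1 -> nr^-1 <= nr `^ (- al).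
Proof.
move=> n1 a1; rewrite -powR_inv1; last by lra.
by apply: ler_powR => //; lra.
Qed.

Arguments pw_inv {nr al}.

Lemma pw_mu (nr mu al : R) : 1 <= nr -> al <= 1 - mu ->
  nr `^ mu / nr <= nr `^ (- al).
Proof.
move=> n1 a1; have n0 : nr != 0 by apply/eqP; lra.
rewrite -powR_inv1; last by lra.
rewrite -powRD; last by rewrite n0 implybT.
by apply: ler_powR => //; lra.
Qed.

Arguments pw_mu {nr mu al}.

Lemma fin1 (Cp e cS S nr g al : R) : 0 < Cp -> 0 < e -> 0 < cS -> 1 <= nr ->
  0 <= g -> al <= 1 -> cS * nr * nr `^ g <= S ->
  (e * S) ^- 2 * (Cp * S) <= Cp / (e ^+ 2 * cS) * nr `^ (- al).
Proof.
move=> Cp0 e0 cS0 n1 g0 a1 HS.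
have p1 := pw_ge1 n1 g0.
have S0 : 0 < S by apply: lt_le_trans HS; rewrite !mulr_gt0 //; lra.
have -> : (e * S) ^- 2 * (Cp * S) = Cp / (e ^+ 2 * cS) * (cS / S).
  by field; rewrite !gt_eqF.
rewrite ler_pM2l ?divr_gt0 ?exprn_gt0 ?mulr_gt0 //.
apply: le_trans (pw_inv n1 a1).
have n0 : 0 < nr by lra.
have h1 : cS * nr <= S.
  apply: le_trans HS; by rewrite ler_peMr ?mulr_ge0 //; lra.
have -> : cS / S = (cS * nr) / S * nr^-1 by field; rewrite !gt_eqF.
rewrite -[X in _ <= X]mul1r ler_pM2r ?invr_gt0 //.
by rewrite ler_pdivrMr // mul1r.
Qed.

Lemma fin2 (Cp eta cS S nr g al mu xb Cx V : R) : 0 < Cp -> 0 < eta -> 0 < cS -> 1 <= nr ->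
  0 <= g -> al <= 1 - mu -> al <= 1 -> cS * nr * nr `^ g <= S ->
  `|xb| <= Cx * nr `^ (mu / 2) ->
  V <= 2 / nr + 2 * xb ^+ 2 / S ->
  eta ^- 2 * (Cp * V) <= eta ^- 2 * Cp * (2 + 2 * (Cx ^+ 2 / cS)) * nr `^ (- al).
Proof.
move=> Cp0 e0 cS0 n1 g0 am a1 HS Hx HV.
have p1 := pw_ge1 n1 g0.
have S0 : 0 < S by apply: lt_le_trans HS; rewrite !mulr_gt0 //; lra.
have xb2 : xb ^+ 2 <= Cx ^+ 2 * nr `^ mu.
  have -> : nr `^ mu = (nr `^ (mu / 2)) ^+ 2.
    by rewrite -powR_mulrn ?powR_ge0 // -powRrM; congr (_ `^ _); field.
  rewrite -exprMn -real_normK ?num_real //; apply: lerXn2r => //;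
    rewrite ?nnegrE ?normr_ge0 //; exact: le_trans (normr_ge0 _) Hx.
have t1 : 2 / nr <= 2 * nr `^ (- al).
  by rewrite ler_pM2l // (pw_inv n1 a1).
have t2 : 2 * xb ^+ 2 / S <= 2 * (Cx ^+ 2 / cS) * nr `^ (- al).
  rewrite -mulrA -[X in _ <= X]mulrA ler_pM2l //.
  apply: (@le_trans _ _ (Cx ^+ 2 * nr `^ mu / S)).
    by rewrite ler_pM2r ?invr_gt0 // xb2.
  apply: (@le_trans _ _ (Cx ^+ 2 * nr `^ mu / (cS * nr))).
    apply: ler_wpM2l; first by rewrite mulr_ge0 ?sqr_ge0 ?powR_ge0.
    rewrite lef_pV2 ?posrE ?mulr_gt0 //; try lra.
    apply: le_trans HS; by rewrite ler_peMr ?mulr_ge0 //; lra.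
  have := pw_mu n1 am => hm.
  have -> : Cx ^+ 2 * nr `^ mu / (cS * nr) = Cx ^+ 2 / cS * (nr `^ mu / nr).
    by field; apply/andP; split; apply/eqP; lra.
  by rewrite ler_wpM2l // divr_ge0 ?sqr_ge0 //; lra.
have V2 : V <= (2 + 2 * (Cx ^+ 2 / cS)) * nr `^ (- al) by lra.
rewrite -[X in _ <= X]mulrA -[X in _ <= X]mulrA; apply: ler_wpM2l; first by rewrite invr_ge0 exprn_ge0 // ltW.
by apply: ler_wpM2l; [exact: ltW Cp0|exact: V2].
Qed.

End RL.

Theorem mainTheorem7 (R : realType) (d : nat) (F : set 'rV[R]_d) (s M : R)
  (dT : measure_display) (T : measurableType dT) (P : probability T R)
  (eps : nat -> R) (delta : nat -> {RV P >-> R}) (gamma mu : R)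
  (betahat shat : nat -> T -> R) :
  bounded_Rd F ->
  minkowski_dim F s ->
  minkowski_content F s M -> 0 < M ->
  (forall j, 0 < eps j) -> (forall j, eps j.+1 < eps j) ->
  (forall j, ('E_P[delta j])%E = 0%E) ->
  (forall j, (delta j : T -> R) \in Lfun P 2%:E) ->
  (forall j, (0 < 'V_P[delta j])%E) ->
  (exists c : R, 0 < c /\ forall n a,
      eigenvalue (cov_matrix P (fun j => delta j) n) a -> c <= a) ->
  (exists C : R, forall n a,
      eigenvalue (cov_matrix P (fun j => delta j) n) a -> a <= C) ->
  let x := fun j => - ln (eps j) in
  let y := fun j (w : T) => ln M + s * x j + delta j w in
  0 <= gamma -> 0 <= mu ->
  (exists c C : R, exists N : nat, 0 < c /\ 0 < C /\ forall n, (N <= n)%N ->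
      c * n%:R `^ gamma <= S2tilde x n <= C * n%:R `^ gamma) ->
  (exists C : R, exists N : nat, forall n, (N <= n)%N ->
      `|xbar x n| <= C * n%:R `^ (mu / 2)) ->
  let alpha := 1 - Num.max gamma mu - 2 * Num.max 0 (mu - gamma) in
  0 < alpha ->
  (forall n w beta s',
      lsq_obj x (fun j => y j w) n (betahat n w) (shat n w)
        <= lsq_obj x (fun j => y j w) n beta s') ->
  forall e : R, 0 < e ->
    (exists C : R, exists N : nat, forall n, (N <= n)%N ->
       (P [set w | (e < `|shat n w - s|)%R] <= (C * n%:R `^ (- alpha))%:E)%E) /\
    (exists C : R, exists N : nat, forall n, (N <= n)%N ->
       (P [set w | (e < `|expR (betahat n w) - M|)%R] <= (C * n%:R `^ (- alpha))%:E)%E).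
Proof.
move=> _ _ _ M0 _ _ Hmean H2 _ _ [Cq HCq] x y g0 m0.
move=> [cS [CS [N1 [cS0 [_ HS]]]]] [Cx [N2 Hx]] alpha a0 Hmin e e0.
pose Cp := Num.max Cq 1.
have Cp1 : 1 <= Cp by rewrite le_max lexx orbT.
have Cp0 : 0 < Cp by apply: lt_le_trans Cp1.
have HCp : forall n b, eigenvalue (cov_matrix P (fun j => delta j : T -> R) n) b -> b <= Cp.
  by move=> n b /HCq h; rewrite le_max h.
have hmax1 : mu <= Num.max gamma mu by rewrite le_max lexx orbT.
have hmax2 : gamma <= Num.max gamma mu by rewrite le_max lexx.
have hmax3 : 0 <= Num.max 0 (mu - gamma) by rewrite le_max lexx.
have al1 : alpha <= 1 - mu by rewrite /alpha; lra.
have al2 : alpha <= 1 by rewrite /alpha; lra.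
pose N := maxn 1 (maxn N1 N2).
have Hn : forall n, (N <= n)%N -> [/\ (0 < n)%N, (N1 <= n)%N & (N2 <= n)%N].
  by move=> n; rewrite /N !geq_max => /andP[-> /andP[-> ->]].
have Sfacts : forall n, (N <= n)%N ->
    cS * n%:R * n%:R `^ gamma <= \sum_(j < n) (x j - xbar x n) ^+ 2 /\
    0 < \sum_(j < n) (x j - xbar x n) ^+ 2.
  move=> n nN; have [n0 nN1 _] := Hn n nN.
  have nr0 : (0 : R) < n%:R by rewrite ltr0n.
  have [h _] := andP (HS n nN1).
  have h1 : cS * n%:R * n%:R `^ gamma <= \sum_(j < n) (x j - xbar x n) ^+ 2.
    rewrite -[X in _ <= X](divfK (negbT (gt_eqF nr0))) -/(S2tilde x n).
    by rewrite mulrAC ler_pM2r.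
  split => //; apply: lt_le_trans h1.
  by rewrite !mulr_gt0 // powR_gt0.
split.
- exists (Cp / (e ^+ 2 * cS)), N => n nN.
  have [n0 nN1 nN2] := Hn n nN.
  have [hSS Spos] := Sfacts n nN.
  set Ssum := \sum_(j < n) (x j - xbar x n) ^+ 2 in hSS Spos.
  pose a := fun j => x j - xbar x n.
  have Eset : [set w | (e < `|shat n w - s|)%R] =
              [set w | (e * Ssum < `|Zf _ _ _ P delta n a w|)%R].
    apply/seteqP; split => w /=;
    have [h1 _] := ident x (fun j => delta j w) n (ln M) s (betahat n w) (shat n w)
      n0 Spos (Hmin n w);
    by rewrite h1 normrM normfV (ger0_norm (ltW Spos)) ltr_pdivlMr.
  rewrite Eset; apply: le_trans.
    apply: (cheb_Zf _ _ _ _ _ H2 Hmean n a (e * Ssum) Cp); last exact: HCp.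
    by rewrite mulr_gt0.
  rewrite lee_fin; apply: (fin1 _ _ _ _ _ gamma) => //; first by rewrite ler1n.
- pose eta := ln (1 + e / M).
  have eta0 : 0 < eta by rewrite ln_gt0 // ltrDl divr_gt0.
  exists (eta ^- 2 * Cp * (2 + 2 * (Cx ^+ 2 / cS))), N => n nN.
  have [n0 nN1 nN2] := Hn n nN.
  have [hSS Spos] := Sfacts n nN.
  set Ssum := \sum_(j < n) (x j - xbar x n) ^+ 2 in hSS Spos.
  pose c := fun j => n%:R^-1 - xbar x n * (x j - xbar x n) / Ssum.
  have hb : forall w, betahat n w = ln M + Zf _ _ _ P delta n c w.
    move=> w; have [_ h2] := ident x (fun j => delta j w) n (ln M) s (betahat n w) (shat n w)
      n0 Spos (Hmin n w).
    have -> : Zf _ _ _ P delta n c w = betahat n w - ln M by rewrite h2.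
    by rewrite addrC subrK.
  apply: le_trans.
    apply: (@le_measure _ _ _ P _ [set w | (eta < `|Zf _ _ _ P delta n c w|)%R]); rewrite ?inE.
    - have -> : [set w | (e < `|expR (betahat n w) - M|)%R] =
                [set w | (e < `|expR (ln M + Zf _ _ _ P delta n c w) - M|)%R].
        by apply/seteqP; split => w /=; rewrite hb.
      apply: mset_lt; apply: mnorm.
      apply: measurable_realfun.measurable_funB => //.
      apply: measurableT_comp => //.
      apply: measurable_realfun.measurable_funD => //; exact: mZf.
    - apply: mset_lt; apply: mnorm; exact: mZf.
    - move=> w /=; rewrite hb; apply: contraTT; rewrite -!leNgt => hle.
      exact: exp_close.
  apply: le_trans.
    apply: (cheb_Zf _ _ _ _ _ H2 Hmean n c eta Cp) => //; exact: HCp.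
  rewrite lee_fin. apply: (fin2 Cp eta cS Ssum n%:R gamma alpha mu (xbar x n) Cx (\sum_(j < n) c j ^+ 2)) => //.
  + by rewrite ler1n.
  + exact: Hx.
  + rewrite /c; apply: (sumc2 n (fun j => x j - xbar x n)) => //.
Qed.
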